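(* For each $\alpha\in\mathbb{Q}\cap[0,1]$ and each $\varepsilon>0$, there is a finite set $\Psi$ of definable predicates that weakly defines an $\varepsilon$-distal cell decomposition over $M_{[0,1]}$ for $\varphi_\alpha(x;y)$.
   Context: $M_{[0,1]}$ is the set of continuous nondecreasing functions $f:[0,1]\to[0,1]$ with $f(0)=0$, $f(1)=1$, with the sup metric, regarded as a metric structure in the language of binary predicates $\varphi_\alpha$ ($\alpha\in\mathbb{Q}\cap[0,1]$), where $\varphi_\alpha(f,g)=f(t)$ for any $t$ with $f(t)+g(t)=\alpha$ (independent of the choice of $t$). If $\phi(x;y)$ is a definable predicate and $\Psi$ is a finite set of definable predicates each of the form $\psi(x;y_1,\dots,y_k)$, then $\Psi$ weakly defines an $\varepsilon$-distal cell decomposition over $M$ for $\phi(x;y)$ if for every finite $B\subseteq M^y$ with $|B|\geq 2$ and every $a\in M^x$, there are $\psi\in\Psi$ and $b_1,\dots,b_k\in B$ such that $\psi(a;b_1,\dots,b_k)>0$ and for all $a'\in M^x$, $\psi(a';b_1,\dots,b_k)>0$ implies $|\phi(a;b)-\phi(a';b)|\leq\varepsilon$ for all $b\in B$. *)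

(* Defs.v *)
From Stdlib Require Import Reals QArith Qreals List ClassicalEpsilon.
Open Scope R_scope.

(** * The structure M_[0,1]
    A continuous nondecreasing f : [0,1] -> [0,1] with f 0 = 0, f 1 = 1 is
    represented by its unique extension to R that is 0 on (-oo,0] and 1 on
    [1,+oo); such extensions are exactly the continuous nondecreasing
    f : R -> R with these boundary values. *)
Definition good (f : R -> R) : Prop :=
  (forall t, continuity_pt f t) /\
  (forall s t, s <= t -> f s <= f t) /\
  (forall t, t <= 0 -> f t = 0) /\
  (forall t, 1 <= t -> f t = 1).

Definition M01 : Type := { f : R -> R | good f }.

Definition fn (f : M01) : R -> R := proj1_sig f.

Definition Rsup (S : R -> Prop) : R :=
  epsilon (inhabits 0) (fun s => is_lub S s).

Definition dM (f g : M01) : R :=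
  Rsup (fun r => exists t, 0 <= t <= 1 /\ r = Rabs (fn f t - fn g t)).

(** phi_alpha(f,g) = f(t) for any t in [0,1] with f(t) + g(t) = alpha. *)
Definition phiA (alpha : Q) (f g : M01) : R :=
  fn f (epsilon (inhabits 0)
          (fun t => 0 <= t <= 1 /\ fn f t + fn g t = Q2R alpha)).

(** Variables are de Bruijn indices; [FSup]/[FInf] bind variable 0.
    Connectives: arbitrary (jointly) continuous u : R -> R -> R (this
    includes constants and unary connectives; by Kolmogorov–Arnold every
    continuous n-ary connective is a composite of such). *)
Definition cont2 (u : R -> R -> R) : Prop :=
  forall x y eps, 0 < eps -> exists delta, 0 < delta /\
    forall x' y', Rabs (x' - x) < delta -> Rabs (y' - y) < delta ->
      Rabs (u x' y' - u x y) < eps.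

Inductive form : Type :=
  | FDist : nat -> nat -> form
  | FPhi : Q -> nat -> nat -> form
  | FConn : forall u : R -> R -> R, cont2 u -> form -> form -> form
  | FSup : form -> form
  | FInf : form -> form.

Fixpoint wf (n : nat) (p : form) : Prop :=
  match p with
  | FDist i j => (i < n)%nat /\ (j < n)%nat
  | FPhi a i j => (0 <= a)%Q /\ (a <= 1)%Q /\ (i < n)%nat /\ (j < n)%nat
  | FConn _ _ p1 p2 => wf n p1 /\ wf n p2
  | FSup p1 => wf (S n) p1
  | FInf p1 => wf (S n) p1
  end.

Definition scons (a : M01) (e : nat -> M01) : nat -> M01 :=
  fun n => match n with O => a | S k => e k end.

Fixpoint eval (p : form) (e : nat -> M01) : R :=
  match p with
  | FDist i j => dM (e i) (e j)
  | FPhi a i j => phiA a (e i) (e j)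
  | FConn u _ p1 p2 => u (eval p1 e) (eval p2 e)
  | FSup p1 => Rsup (fun r => exists m, r = eval p1 (scons m e))
  | FInf p1 => - Rsup (fun r => exists m, r = - eval p1 (scons m e))
  end.

Definition definable (n : nat) (P : (nat -> M01) -> R) : Prop :=
  forall eps, 0 < eps -> exists p, wf n p /\
    forall e, Rabs (P e - eval p e) <= eps.

Record dpred : Type := {
  dp_k : nat;
  dp_P : (nat -> M01) -> R;
  dp_def : definable (S dp_k) dp_P }.

(** psi(a; b_1..b_k) with b_i = bs (i-1). *)
Definition dpval (psi : dpred) (a : M01) (bs : nat -> M01) : R :=
  dp_P psi (scons a bs).

(** Psi weakly defines an eps-distal cell decomposition over M for
    phi(x;y) (x, y single variables). Finite B ⊆ M with |B| >= 2 is a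
    duplicate-free list of length >= 2. *)
Definition weakly_distal_cd (Psi : list dpred) (eps : R)
    (phi : M01 -> M01 -> R) : Prop :=
  forall (B : list M01), NoDup B -> (2 <= length B)%nat ->
  forall a : M01,
    exists psi, In psi Psi /\
    exists bs : nat -> M01,
      (forall i, (i < dp_k psi)%nat -> In (bs i) B) /\
      dpval psi a bs > 0 /\
      forall a' : M01, dpval psi a' bs > 0 ->
        forall b, In b B -> Rabs (phi a b - phi a' b) <= eps.

(* Main.v *)
Require Import Defs.
From Stdlib Require Import Reals QArith Qreals List Lra Lia ZArith Classical ClassicalEpsilon.
Open Scope R_scope.

Lemma fn_mono (f : M01) s t : s <= t -> fn f s <= fn f t.
Proof. destruct f as [f [H1 [H2 [H3 H4]]]]; simpl; auto. Qed.

Lemma fn_range (f : M01) t : 0 <= fn f t <= 1.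
Proof.
  destruct f as [f [H1 [H2 [H3 H4]]]]; simpl.
  split.
  - rewrite <- (H3 (Rmin t 0)) by apply Rmin_r. apply H2, Rmin_l.
  - rewrite <- (H4 (Rmax t 1)) by apply Rmax_r. apply H2, Rmax_l.
Qed.

Lemma cross (alpha : Q) (f g : M01) : (0 <= alpha)%Q -> (alpha <= 1)%Q ->
  exists t, 0 <= t <= 1 /\ fn f t + fn g t = Q2R alpha.
Proof.
  intros Ha Hb.
  assert (A0 : 0 <= Q2R alpha) by (rewrite <- RMicromega.Q2R_0; now apply Qle_Rle).
  assert (A1 : Q2R alpha <= 1) by (rewrite <- RMicromega.Q2R_1; now apply Qle_Rle).
  destruct f as [f [H1 [H2 [H3 H4]]]]; destruct g as [g [G1 [G2 [G3 G4]]]]; simpl.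
  destruct (IVT_cor (fun t => f t + g t - Q2R alpha) 0 1) as [z [Hz1 Hz2]].
  - intro t. apply continuity_pt_minus; [apply continuity_pt_plus; auto | apply continuity_pt_const; intros ? ?; auto].
  - lra.
  - rewrite H3, G3, H4, G4 by lra. nra.
  - exists z. split; [auto | lra].
Qed.

Lemma phi_spec (alpha : Q) (f g : M01) : (0 <= alpha)%Q -> (alpha <= 1)%Q ->
  exists t, phiA alpha f g = fn f t /\ fn f t + fn g t = Q2R alpha.
Proof.
  intros Ha Hb. unfold phiA.
  set (t := epsilon _ _).
  assert (H := epsilon_spec (inhabits 0) (fun t => 0 <= t <= 1 /\ fn f t + fn g t = Q2R alpha) (cross alpha f g Ha Hb)).
  exists t. split; [reflexivity | apply H].
Qed.

Lemma phi_gt alpha f g c : (0 <= alpha)%Q -> (alpha <= 1)%Q ->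
  (phiA alpha f g > c <-> exists t, fn f t > c /\ fn g t < Q2R alpha - c).
Proof.
  intros Ha Hb. destruct (phi_spec alpha f g Ha Hb) as [t0 [E1 E2]].
  rewrite E1. split.
  - intro H. exists t0. lra.
  - intros [t [T1 T2]]. destruct (Rle_or_lt t t0) as [L|L].
    + pose proof (fn_mono f _ _ L). lra.
    + pose proof (fn_mono g _ _ (Rlt_le _ _ L)). lra.
Qed.

Lemma phi_lt alpha f g c : (0 <= alpha)%Q -> (alpha <= 1)%Q ->
  (phiA alpha f g < c <-> exists t, fn f t < c /\ fn g t > Q2R alpha - c).
Proof.
  intros Ha Hb. destruct (phi_spec alpha f g Ha Hb) as [t0 [E1 E2]].
  rewrite E1. split.
  - intro H. exists t0. lra.
  - intros [t [T1 T2]]. destruct (Rle_or_lt t0 t) as [L|L].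
    + pose proof (fn_mono f _ _ L). lra.
    + pose proof (fn_mono g _ _ (Rlt_le _ _ L)). lra.
Qed.

Definition cond (alpha : Q) (s : bool * R) (x y : M01) : Prop :=
  if fst s then phiA alpha x y > snd s else phiA alpha x y < snd s.

Lemma cond_total alpha s b1 b2 : (0 <= alpha)%Q -> (alpha <= 1)%Q ->
  (forall x, cond alpha s x b1 -> cond alpha s x b2) \/
  (forall x, cond alpha s x b2 -> cond alpha s x b1).
Proof.
  intros Ha Hb. destruct s as [[|] c]; unfold cond; simpl.
  - set (d := Q2R alpha - c).
    destruct (classic (forall t, fn b1 t < d -> fn b2 t < d)) as [H|H].
    + left. intros x Hx. apply phi_gt in Hx; auto. apply phi_gt; auto.
      destruct Hx as [t [T1 T2]]. exists t. split; auto.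
    + right. apply not_all_ex_not in H. destruct H as [t1 H].
      assert (P1 : fn b1 t1 < d) by (apply NNPP; intro; apply H; intro; lra).
      assert (P2 : fn b2 t1 >= d) by (apply Rnot_lt_ge; intro; apply H; auto).
      intros x Hx. apply phi_gt in Hx; auto. apply phi_gt; auto.
      destruct Hx as [t [T1 T2]]. exists t. split; auto.
      destruct (Rle_or_lt t1 t) as [L|L].
      * pose proof (fn_mono b2 _ _ L). unfold d in *. lra.
      * pose proof (fn_mono b1 _ _ (Rlt_le _ _ L)). unfold d in *. lra.
  - set (d := Q2R alpha - c).
    destruct (classic (forall t, fn b1 t > d -> fn b2 t > d)) as [H|H].
    + left. intros x Hx. apply phi_lt in Hx; auto. apply phi_lt; auto.
      destruct Hx as [t [T1 T2]]. exists t. split; auto.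
    + right. apply not_all_ex_not in H. destruct H as [t1 H].
      assert (P1 : fn b1 t1 > d) by (apply NNPP; intro; apply H; intro; lra).
      assert (P2 : fn b2 t1 <= d) by (apply Rnot_lt_le; intro; apply H; auto).
      intros x Hx. apply phi_lt in Hx; auto. apply phi_lt; auto.
      destruct Hx as [t [T1 T2]]. exists t. split; auto.
      destruct (Rle_or_lt t t1) as [L|L].
      * pose proof (fn_mono b2 _ _ L). unfold d in *. lra.
      * pose proof (fn_mono b1 _ _ (Rlt_le _ _ L)). unfold d in *. lra.
Qed.

Lemma min_exists {A} (R : A -> A -> Prop) (Q : A -> Prop) :
  (forall x y, R x y \/ R y x) -> (forall x y z, R x y -> R y z -> R x z) ->
  forall L, (exists b, In b L /\ Q b) ->
  exists m, In m L /\ Q m /\ forall b, In b L -> Q b -> R m b.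
Proof.
  intros Tot Tr L. induction L as [|x L IH]; intros [b [Hb Qb]]; [destruct Hb|].
  destruct (classic (exists b, In b L /\ Q b)) as [E|NE].
  - destruct (IH E) as [m [M1 [M2 M3]]].
    destruct (classic (Q x)) as [Qx|Qx].
    + destruct (Tot x m) as [Rxm|Rmx].
      * exists x. split; [left; auto|split; auto].
        intros b' [<-|Hb'] Qb'; [destruct (Tot x x); auto|]. eauto.
      * exists m. split; [right; auto|split; auto].
        intros b' [<-|Hb'] Qb'; auto.
    + exists m. split; [right; auto|split; auto].
      intros b' [<-|Hb'] Qb'; [contradiction|auto].
  - destruct Hb as [<-|Hb]; [|exfalso; eauto].
    exists x. split; [left; auto|split; auto].
    intros b' [<-|Hb'] Qb'; [destruct (Tot x x); auto|exfalso; eauto].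
Qed.

Lemma cont2_one : cont2 (fun _ _ => 1).
Proof. intros x y e He. exists 1. split; [lra|]. intros. rewrite Rminus_diag, Rabs_R0. auto. Qed.

Lemma cont2_min : cont2 Rmin.
Proof.
  intros x y e He. exists e. split; auto. intros x' y' H1 H2.
  apply Rabs_def2 in H1; apply Rabs_def2 in H2.
  unfold Rmin; destruct (Rle_dec x' y'); destruct (Rle_dec x y); apply Rabs_def1; lra.
Qed.

Definition uslot (s : bool * R) : R -> R -> R :=
  fun u _ => if fst s then u - snd s else snd s - u.

Lemma cont2_slot s : cont2 (uslot s).
Proof.
  intros x y e He. exists e. split; auto. intros x' y' H1 H2.
  apply Rabs_def2 in H1. unfold uslot; destruct (fst s); apply Rabs_def1; lra.
Qed.

Definition fone : form := FConn (fun _ _ => 1) cont2_one (FDist 0 0) (FDist 0 0).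

Fixpoint formL (alpha : Q) (n : nat) (l : list (bool * R)) : form :=
  match l with
  | nil => fone
  | s :: l' => FConn Rmin cont2_min
      (FConn (uslot s) (cont2_slot s) (FPhi alpha 0 (S n)) (FPhi alpha 0 (S n)))
      (formL alpha (S n) l')
  end.

Lemma wf_formL alpha : (0 <= alpha)%Q -> (alpha <= 1)%Q ->
  forall l n k, (n + length l <= k)%nat -> wf (S k) (formL alpha n l).
Proof.
  intros Ha Hb l. induction l as [|s l IH]; intros n k Hk; simpl.
  - lia.
  - simpl in Hk. repeat split; auto; try lia. apply IH. lia.
Qed.

Lemma eval_formL alpha : forall l n a bs,
  eval (formL alpha n l) (scons a bs) > 0 <->
  forall j, (j < length l)%nat -> cond alpha (nth j l (true, 0)) a (bs (n + j)%nat).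
Proof.
  induction l as [|s l IH]; intros n a bs; simpl.
  - split; [intros; lia | intros; lra].
  - rewrite Rmin_Rgt. rewrite IH. unfold uslot, cond.
    split.
    + intros [H1 H2] j Hj. destruct j as [|j].
      * rewrite Nat.add_0_r. destruct (fst s); lra.
      * replace (n + S j)%nat with (S n + j)%nat by lia. apply H2. lia.
    + intros H. split.
      * specialize (H 0%nat ltac:(lia)). rewrite Nat.add_0_r in H. simpl in H.
        destruct (fst s); lra.
      * intros j Hj. replace (S n + j)%nat with (n + S j)%nat by lia. apply (H (S j)). lia.
Qed.

Lemma def_formL alpha (Ha : (0 <= alpha)%Q) (Hb : (alpha <= 1)%Q) l :
  definable (S (length l)) (eval (formL alpha 0 l)).
Proof.
  intros e He. exists (formL alpha 0 l). split.
  - apply wf_formL; auto.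
  - intro. rewrite Rminus_diag, Rabs_R0. lra.
Qed.

Definition mkpsi alpha Ha Hb l : dpred :=
  {| dp_k := length l; dp_P := eval (formL alpha 0 l); dp_def := def_formL alpha Ha Hb l |}.

Fixpoint subs {A} (l : list A) : list (list A) :=
  match l with
  | nil => nil :: nil
  | x :: l' => subs l' ++ map (cons x) (subs l')
  end.

Lemma filter_subs {A} (p : A -> bool) l : In (filter p l) (subs l).
Proof.
  induction l as [|x l IH]; simpl; auto.
  apply in_or_app. destruct (p x); [right; apply in_map; auto | left; auto].
Qed.

Lemma choose_list {A B} (W : A -> B -> Prop) : forall l,
  (forall s, In s l -> exists b, W s b) ->
  exists ws, length ws = length l /\ forall j d1 d2, (j < length l)%nat -> W (nth j l d1) (nth j ws d2).
Proof.
  induction l as [|x l IH]; intros H.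
  - exists nil. split; auto. intros; simpl in *; lia.
  - destruct (H x (or_introl eq_refl)) as [b Hb].
    destruct IH as [ws [L1 L2]]; [intros; apply H; right; auto|].
    exists (b :: ws). split; [simpl; auto|]. intros [|j] d1 d2 Hj; simpl; auto.
    apply L2. simpl in Hj; lia.
Qed.

Theorem mainTheorem5 :
  forall (alpha : Q), (0 <= alpha)%Q -> (alpha <= 1)%Q ->
  forall eps : R, 0 < eps ->
  exists Psi : list dpred, weakly_distal_cd Psi eps (phiA alpha).
Proof.
  intros alpha Ha Hb eps He.
  set (dl := eps / 2).
  assert (Hd : 0 < dl) by (unfold dl; lra).
  set (cl := fun k : nat => (INR k - 2) * dl).
  set (K := (Z.to_nat (up (1 / dl)) + 3)%nat).
  set (full := flat_map (fun k => (true, cl k) :: (false, cl k) :: nil) (seq 0 K)).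
  exists (map (mkpsi alpha Ha Hb) (subs full)).
  intros B _ _ a.
  set (ok := fun s => exists b, In b B /\ cond alpha s a b).
  set (sel := filter (fun s => if excluded_middle_informative (ok s) then true else false) full).
  set (W := fun s w => In w B /\ cond alpha s a w /\
          forall b, In b B -> cond alpha s a b -> forall x, cond alpha s x w -> cond alpha s x b).
  assert (HW : forall s, In s sel -> exists w, W s w).
  { intros s Hs. unfold sel in Hs. apply filter_In in Hs. destruct Hs as [_ Hs].
    destruct (excluded_middle_informative (ok s)) as [Ok|]; [|discriminate].
    destruct (min_exists (fun w b => forall x, cond alpha s x w -> cond alpha s x b)
               (cond alpha s a)) with (L := B) as [m [M1 [M2 M3]]]; auto.
    - intros; apply cond_total; auto.
    - exists m. unfold W. auto. }
  destruct (choose_list W sel HW) as [ws [L1 L2]].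
  set (bs := fun i => nth i ws a).
  exists (mkpsi alpha Ha Hb sel). split.
  { apply in_map. apply filter_subs. }
  exists bs.
  assert (Hsel : forall a', dpval (mkpsi alpha Ha Hb sel) a' bs > 0 <->
            forall j, (j < length sel)%nat -> cond alpha (nth j sel (true, 0)) a' (bs j)).
  { intro a'. unfold dpval; simpl. apply eval_formL. }
  split; [|split].
  - intros i Hi. simpl in Hi. destruct (L2 i (true, 0) a Hi) as [X _]. exact X.
  - apply Hsel. intros j Hj. destruct (L2 j (true, 0) a Hj) as [_ [X _]]. exact X.
  - intros a' Ha' b Hb'. rewrite Hsel in Ha'.
    assert (Key : forall s, In s sel -> cond alpha s a b -> cond alpha s a' b).
    { intros s Hs Hc. destruct (In_nth sel s (true, 0) Hs) as [i [Hi Ei]].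
      destruct (L2 i (true, 0) a Hi) as [_ [_ H3]]. rewrite Ei in H3.
      apply (H3 b Hb' Hc). specialize (Ha' i Hi). rewrite Ei in Ha'. exact Ha'. }
    assert (Insel : forall s, In s full -> cond alpha s a b -> In s sel).
    { intros s Hs Hc. unfold sel. apply filter_In. split; auto.
      destruct (excluded_middle_informative (ok s)) as [|N]; auto.
      exfalso. apply N. exists b. auto. }
    set (v := phiA alpha a b).
    assert (Hv : 0 <= v <= 1).
    { destruct (phi_spec alpha a b Ha Hb) as [t [E _]]. unfold v; rewrite E. apply fn_range. }
    set (w := v / dl).
    assert (Ew : v = w * dl) by (unfold w; field; lra).
    destruct (archimed w) as [U1 U2].
    set (n := up w) in *.
    assert (Hn0 : (0 < n)%Z).
    { apply lt_IZR. simpl. assert (0 <= w) by (unfold w; apply Rmult_le_pos; [lra|left; apply Rinv_0_lt_compat; lra]). lra. }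
    assert (Hn1 : (n <= up (1 / dl))%Z).
    { destruct (archimed (1 / dl)) as [V1 V2].
      assert (w <= 1 / dl) by (unfold w, Rdiv; rewrite Rmult_1_l;
        rewrite <- (Rmult_1_l (/ dl)) at 2; apply Rmult_le_compat_r; [left; apply Rinv_0_lt_compat|]; lra).
      assert (IZR n < IZR (up (1 / dl) + 1)) by (rewrite plus_IZR; lra).
      apply lt_IZR in H0. lia. }
    set (jn := Z.to_nat n).
    assert (Ej : INR jn = IZR n).
    { unfold jn; rewrite INR_IZR_INZ, Znat.Z2Nat.id. reflexivity. apply Z.lt_le_incl. exact Hn0. }
    assert (InF : forall k kd, (k < K)%nat -> In (kd, cl k) full).
    { intros k kd Hk. unfold full. apply in_flat_map. exists k. split.
      - apply in_seq. lia.
      - destruct kd; simpl; auto. }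
    assert (C1 : cond alpha (true, cl jn) a' b).
    { apply Key.
      - apply Insel. + apply InF. unfold K, jn. lia.
        + unfold cond; simpl. fold v. unfold cl. rewrite Ej. nra.
      - unfold cond; simpl. fold v. unfold cl. rewrite Ej. nra. }
    assert (C2 : cond alpha (false, cl (jn + 2)%nat) a' b).
    { assert (E2 : INR (jn + 2)%nat = IZR n + 2) by (rewrite plus_INR, Ej; simpl; lra).
      apply Key.
      - apply Insel. + apply InF. unfold K, jn. lia.
        + unfold cond; simpl. fold v. unfold cl. rewrite E2. nra.
      - unfold cond; simpl. fold v. unfold cl. rewrite E2. nra. }
    unfold cond in C1, C2; simpl in C1, C2. unfold cl in C1, C2.
    rewrite plus_INR, Ej in C2. simpl in C2. fold v.
    apply Rabs_le. unfold dl in *. nra.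
Qed.
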